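(* Let $W:\mathbb{N}\to\mathbb{R}$ be increasing with $W(N)\to\infty$, and let $(x_n)_{n\in\mathbb{N}}$ be a bounded complex sequence. Suppose $L=\lim_{N\to\infty}\frac{W(N-1)}{W(N)}$ exists and $L\in(0,1)$. For $n\ge0$ let $\lambda_n=L^n-L^{n+1}$. Then \[ \frac{1}{W(N)}\sum_{n=1}^{N}\Delta W(n)\,x_n=\sum_{k=0}^{N}\lambda_k x_{N-k}+o(1)\qquad (N\to\infty), \] where $\Delta W(n)=W(n)-W(n-1)$.
   Context: $\mathbb{N}=\{0,1,2,\dots\}$. The left side is the $N$-th $W$-weighted average $\mathbb{E}^W_{n\le N}x_n$ (defined for $N$ large enough that $W(N)\neq 0$). *)

(* Defs.v *)
From Stdlib Require Import Reals.
From Coquelicot Require Import Coquelicot.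
Open Scope R_scope.

Definition DeltaW (W : nat -> R) (n : nat) : R := W n - W (n - 1)%nat.

Definition lam (L : R) (n : nat) : R := L ^ n - L ^ (S n).

Definition Wavg (W : nat -> R) (x : nat -> C) (N : nat) : C :=
  Cmult (RtoC (/ W N)) (sum_n_m (fun n => Cmult (RtoC (DeltaW W n)) (x n)) 1 N).

Definition lamsum (L : R) (x : nat -> C) (N : nat) : C :=
  sum_n_m (fun k => Cmult (RtoC (lam L k)) (x (N - k)%nat)) 0 N.

(* Main.v *)
Require Import Defs.
From Stdlib Require Import Reals Lia Lra.
From Coquelicot Require Import Coquelicot.
Open Scope R_scope.

Lemma sum_rev (G : AbelianMonoid) (N : nat) : forall (f : nat -> G),
  sum_n_m f 0 N = sum_n_m (fun k => f (N - k)%nat) 0 N.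
Proof.
  induction N as [|N IH]; intro f.
  - rewrite !sum_n_n. reflexivity.
  - rewrite sum_Sn_m by lia. rewrite <- sum_n_m_S. rewrite IH.
    rewrite sum_n_Sm by lia. rewrite plus_comm. f_equal.
    + apply sum_n_m_ext_loc. intros k Hk. f_equal. lia.
    + f_equal. lia.
Qed.

Lemma sum_tri (u v : nat -> C) (N : nat) :
  Cmod (Cminus (sum_n_m u 0 N) (sum_n_m v 0 N)) <= sum_n_m (fun n => Cmod (Cminus (u n) (v n))) 0 N.
Proof.
  induction N as [|N IH].
  - rewrite !sum_n_n. lra.
  - rewrite !sum_n_Sm by lia.
    replace (Cminus (plus (sum_n_m u 0 N) (u (S N))) (plus (sum_n_m v 0 N) (v (S N))))
      with (Cplus (Cminus (sum_n_m u 0 N) (sum_n_m v 0 N)) (Cminus (u (S N)) (v (S N)))).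
    + eapply Rle_trans. apply Cmod_triangle. change (plus ?a ?b) with (a + b). lra.
    + change plus with Cplus. unfold Cminus. ring.
Qed.

Lemma sum_tele (W : nat -> R) (m : nat) : sum_n_m (DeltaW W) 1 m = W m - W 0%nat.
Proof.
  induction m as [|m IH].
  - rewrite sum_n_m_zero by lia. change (zero : R) with 0. lra.
  - rewrite sum_n_Sm by lia. rewrite IH. change plus with Rplus. unfold DeltaW.
    replace (S m - 1)%nat with m by lia. lra.
Qed.

Lemma sum_lam (L : R) (K m : nat) : sum_n_m (fun k => lam L (K + k)) 0 m = L ^ K - L ^ (K + S m).
Proof.
  induction m as [|m IH].
  - rewrite sum_n_n. unfold lam. rewrite Nat.add_0_r, Nat.add_1_r. reflexivity.
  - rewrite sum_n_Sm by lia. rewrite IH. change plus with Rplus. unfold lam.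
    replace (S (K + S m)) with (K + S (S m))%nat by lia. lra.
Qed.

Lemma ratio_pow (W : nat -> R) (L : R) (N0 : nat) :
  (forall n, (N0 <= n)%nat -> 0 < W n) ->
  is_lim_seq (fun N : nat => W (N - 1)%nat / W N) L ->
  forall k, is_lim_seq (fun N => W (N - k)%nat / W N) (L ^ k).
Proof.
  intros Hpos Hrat k. induction k as [|k IH].
  - apply is_lim_seq_ext_loc with (fun _ => 1). exists N0. intros n Hn.
    rewrite Nat.sub_0_r. specialize (Hpos n Hn). field. lra.
    apply is_lim_seq_const.
  - assert (Hr : is_lim_seq (fun N => W (N - k - 1)%nat / W (N - k)%nat) L).
    { apply (is_lim_seq_incr_n _ k). eapply is_lim_seq_ext; [|exact Hrat].
      intro n. simpl. replace (n + k - k)%nat with n by lia. reflexivity. }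
    apply is_lim_seq_ext_loc with (fun N => W (N - k - 1)%nat / W (N - k)%nat * (W (N - k)%nat / W N)).
    + exists (N0 + S k)%nat. intros n Hn.
      pose proof (Hpos (n - k)%nat ltac:(lia)). pose proof (Hpos n ltac:(lia)).
      replace (n - k - 1)%nat with (n - S k)%nat by lia. field. lra.
    + simpl. apply is_lim_seq_mult'; assumption.
Qed.

Definition aW (W : nat -> R) (N n : nat) : R := if Nat.eqb n 0 then 0 else DeltaW W n / W N.
Definition cW W L N n := aW W N n - lam L (N - n).

Lemma cW_lim (W : nat -> R) (L : R) (N0 : nat) :
  (forall n, (N0 <= n)%nat -> 0 < W n) ->
  is_lim_seq (fun N : nat => W (N - 1)%nat / W N) L ->
  forall k, is_lim_seq (fun N => Rabs (cW W L N (N - k)%nat)) 0.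
Proof.
  intros Hpos Hrat k.
  replace (Finite 0) with (Rbar_abs (L ^ k - L ^ S k - lam L k)).
  2:{ unfold lam. simpl. f_equal. replace (L ^ k - L * L ^ k - (L ^ k - L * L ^ k)) with 0 by ring.
      apply Rabs_R0. }
  apply is_lim_seq_abs.
  apply is_lim_seq_ext_loc with (fun N => W (N - k)%nat / W N - W (N - S k)%nat / W N - lam L k).
  - exists (N0 + S k)%nat. intros n Hn. unfold cW, aW.
    replace (Nat.eqb (n - k) 0) with false by (symmetry; apply Nat.eqb_neq; lia).
    replace (n - (n - k))%nat with k by lia. unfold DeltaW.
    replace (n - k - 1)%nat with (n - S k)%nat by lia.
    pose proof (Hpos n ltac:(lia)). field. lra.
  - apply is_lim_seq_minus'; [apply is_lim_seq_minus'|apply is_lim_seq_const];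
      apply (ratio_pow W L N0); assumption.
Qed.

Lemma T2_lim (W : nat -> R) (L : R) (N0 : nat) :
  (forall n, (N0 <= n)%nat -> 0 < W n) ->
  is_lim_seq (fun N : nat => W (N - 1)%nat / W N) L ->
  forall K, is_lim_seq (fun N => sum_n_m (fun n => Rabs (cW W L N n)) (N + 1 - K) N) 0.
Proof.
  intros Hpos Hrat K. induction K as [|K IH].
  - eapply is_lim_seq_ext; [|apply is_lim_seq_const]. intro n.
    rewrite sum_n_m_zero by lia. reflexivity.
  - apply is_lim_seq_ext_loc with
      (fun N => Rabs (cW W L N (N - K)%nat) + sum_n_m (fun n => Rabs (cW W L N n)) (N + 1 - K) N).
    + exists (S K). intros n Hn. rewrite (sum_Sn_m _ (n + 1 - S K)) by lia.
      replace (n + 1 - S K)%nat with (n - K)%nat by lia.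
      replace (S (n - K)) with (n + 1 - K)%nat by lia. reflexivity.
    + replace (Finite 0) with (Finite (0 + 0)) by (f_equal; ring).
      apply is_lim_seq_plus'; [apply (cW_lim W L N0)|]; assumption.
Qed.

Lemma S_bound (W : nat -> R) (L : R) (N0 K N : nat) :
  (forall n : nat, W n <= W (S n)) ->
  (forall n, (N0 <= n)%nat -> 0 < W n) -> 0 < L < 1 ->
  (K <= N)%nat -> (N0 <= N)%nat ->
  sum_n_m (fun n => Rabs (cW W L N n)) 0 N <=
  (W (N - K)%nat - W 0%nat) / W N + L ^ K + sum_n_m (fun n => Rabs (cW W L N n)) (N + 1 - K) N.
Proof.
  intros Hmono Hpos HL HKN HN0.
  pose proof (Hpos N HN0) as HWN.
  rewrite (sum_n_m_Chasles _ 0 (N - K) N) by lia.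
  replace (S (N - K)) with (N + 1 - K)%nat by lia. change plus with Rplus.
  cut (sum_n_m (fun n => Rabs (cW W L N n)) 0 (N - K) <= (W (N - K)%nat - W 0%nat) / W N + L ^ K).
  { lra. }
  assert (Ha : forall n, 0 <= aW W N n).
  { intro n. unfold aW. destruct (Nat.eqb n 0) eqn:E. lra.
    apply Nat.eqb_neq in E. unfold DeltaW. apply Rdiv_le_0_compat; [|lra].
    pose proof (Hmono (n - 1)%nat). replace (S (n - 1)) with n in H by lia. lra. }
  assert (Hl : forall k, 0 <= lam L k).
  { intro k. unfold lam. simpl. pose proof (pow_le L k ltac:(lra)). nra. }
  eapply Rle_trans.
  { apply sum_n_m_le with (b := fun n => aW W N n + lam L (N - n)).
    intro k. unfold cW. pose proof (Ha k). pose proof (Hl (N - k)%nat).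
    unfold Rabs; destruct Rcase_abs; lra. }
  rewrite (sum_n_m_plus (G:=R_AbelianMonoid) (fun n => aW W N n) (fun n => lam L (N - n))). change plus with Rplus.
  apply Rplus_le_compat.
  - rewrite sum_Sn_m by lia. change plus with Rplus. unfold aW at 1. simpl.
    rewrite (sum_n_m_ext_loc _ (fun n => mult (DeltaW W n) (/ W N))).
    2:{ intros k Hk. unfold aW. replace (Nat.eqb k 0) with false by (symmetry; apply Nat.eqb_neq; lia).
        reflexivity. }
    rewrite sum_n_m_mult_r. rewrite sum_tele. change mult with Rmult. unfold Rdiv. lra.
  - rewrite sum_rev.
    rewrite (sum_n_m_ext_loc _ (fun k => lam L (K + k))).
    2:{ intros k Hk. f_equal. lia. }
    rewrite sum_lam. pose proof (pow_lt L (K + S (N - K)) ltac:(lra)). lra.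
Qed.

Lemma Wavg_eq W x N : Wavg W x N = sum_n_m (fun n => Cmult (RtoC (aW W N n)) (x n)) 0 N.
Proof.
  unfold Wavg. rewrite (sum_Sn_m _ 0 N) by lia. unfold aW at 1. simpl.
  replace (Cmult (RtoC 0) (x 0%nat)) with (zero : C_AbelianMonoid)
    by (apply injective_projections; simpl; ring).
  rewrite plus_zero_l.
  symmetry. rewrite (sum_n_m_ext_loc (fun n => Cmult (RtoC (aW W N n)) (x n)) (fun n => mult (RtoC (/ W N)) (Cmult (RtoC (DeltaW W n)) (x n)))).
  - rewrite (sum_n_m_mult_l (K := C_Ring)). reflexivity.
  - intros k Hk. unfold aW. replace (Nat.eqb k 0) with false by (symmetry; apply Nat.eqb_neq; lia).
    change mult with Cmult. unfold Rdiv. rewrite RtoC_mult, !Cmult_assoc, (Cmult_comm (RtoC (DeltaW W k))). reflexivity.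
Qed.

Lemma lamsum_eq L x N : lamsum L x N = sum_n_m (fun n => Cmult (RtoC (lam L (N - n))) (x n)) 0 N.
Proof.
  unfold lamsum. rewrite (sum_rev _ N (fun n => Cmult (RtoC (lam L (N - n))) (x n))).
  apply sum_n_m_ext_loc. intros k Hk. f_equal. f_equal. f_equal. lia.
Qed.

Lemma A_bound W x L M N : (forall n, Cmod (x n) <= M) ->
  Cmod (Cminus (Wavg W x N) (lamsum L x N)) <= M * sum_n_m (fun n => Rabs (cW W L N n)) 0 N.
Proof.
  intros HM. rewrite Wavg_eq, lamsum_eq. eapply Rle_trans. apply sum_tri.
  rewrite <- (sum_n_m_mult_l (K := R_Ring)).
  apply sum_n_m_le. intro k. change mult with Rmult.
  replace (Cminus (Cmult (RtoC (aW W N k)) (x k)) (Cmult (RtoC (lam L (N - k))) (x k)))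
    with (Cmult (RtoC (cW W L N k)) (x k)).
  - rewrite Cmod_mult, Cmod_R. pose proof (HM k). pose proof (Rabs_pos (cW W L N k)). nra.
  - unfold cW, Rminus. rewrite RtoC_plus, RtoC_opp. unfold Cminus. ring.
Qed.

Theorem mainTheorem8 (W : nat -> R) (x : nat -> C) (L : R) :
  (forall n : nat, W n <= W (S n)) ->
  is_lim_seq (fun N => W N) p_infty ->
  (exists M : R, forall n : nat, Cmod (x n) <= M) ->
  is_lim_seq (fun N : nat => W (N - 1)%nat / W N) L ->
  0 < L < 1 ->
  is_lim_seq (fun N : nat => Cmod (Cminus (Wavg W x N) (lamsum L x N))) 0.
Proof.
  intros Hmono Hinf [M HM] Hrat HL.
  assert (HM0 : 0 <= M) by (pose proof (Cmod_ge_0 (x 0%nat)); pose proof (HM 0%nat); lra).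
  apply is_lim_seq_spec in Hinf. destruct (Hinf 0) as [N0 HN0].
  assert (Hpos : forall n, (N0 <= n)%nat -> 0 < W n) by (intros; apply HN0; lia).
  set (S := fun N => sum_n_m (fun n => Rabs (cW W L N n)) 0 N).
  assert (HS : is_lim_seq S 0).
  { apply is_lim_seq_spec. intro eps.
    assert (He : 0 < eps / 4) by (pose proof (cond_pos eps); lra).
    destruct (pow_lt_1_zero L ltac:(rewrite Rabs_pos_eq; lra) _ He) as [K HK].
    specialize (HK K (le_n K)). rewrite Rabs_pos_eq in HK by (apply pow_le; lra).
    assert (HU : is_lim_seq (fun N => (W (N - K)%nat - W 0%nat) / W N + L ^ K
        + sum_n_m (fun n => Rabs (cW W L N n)) (N + 1 - K) N) (L ^ K - 0 + L ^ K + 0)).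
    { apply is_lim_seq_plus'; [apply is_lim_seq_plus'|apply (T2_lim W L N0); assumption].
      - apply is_lim_seq_ext with (fun N => W (N - K)%nat / W N - W 0%nat * / W N).
        { intro n. unfold Rdiv. ring. }
        apply is_lim_seq_minus'. apply (ratio_pow W L N0); assumption.
        replace 0 with (W 0%nat * 0) by ring.
        apply is_lim_seq_mult'. apply is_lim_seq_const.
        replace (Finite 0) with (Rbar_inv p_infty) by reflexivity.
        apply is_lim_seq_inv. apply is_lim_seq_spec. exact Hinf. discriminate.
      - apply is_lim_seq_const. }
    apply is_lim_seq_spec in HU.
    assert (He2 : 0 < eps / 4) by lra.
    destruct (HU (mkposreal _ He2)) as [N1 HN1].
    exists (N0 + K + N1)%nat. intros n Hn.
    specialize (HN1 n ltac:(lia)). simpl in HN1.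
    pose proof (S_bound W L N0 K n Hmono Hpos HL ltac:(lia) ltac:(lia)).
    assert (0 <= S n).
    { unfold S. pose proof (sum_n_m_const_zero (G:=R_AbelianMonoid) 0 n) as Z.
      change (zero : R_AbelianMonoid) with 0 in Z.
      rewrite <- Z. apply sum_n_m_le. intro k. apply Rabs_pos. }
    unfold S in *. rewrite Rminus_0_r, Rabs_pos_eq by lra.
    apply Rabs_def2 in HN1. lra. }
  apply is_lim_seq_le_le with (fun _ => 0) (fun N => M * S N).
  - intro n. split. apply Cmod_ge_0. apply A_bound. exact HM.
  - apply is_lim_seq_const.
  - replace (Finite 0) with (Rbar_mult M 0) by (simpl; f_equal; ring).
    apply is_lim_seq_scal_l. exact HS.
Qed.
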